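(* Let $C_2$ denote the 2-chain. Then \[ [C_2 \odot C_2]' = \Big\{ \textstyle\bigsqcup_{i=1}^{n} C_2 : n \ge 2 \Big\} \cup \{ X_n : n \ge 3 \}, \] i.e. the posets $P$ with $P \oslash' C_2 \cong C_2$ and $P\not\cong C_2$ are exactly the parallel compositions (disjoint unions with elements of different copies incomparable) of $n\ge2$ copies of the 2-chain and the $n$-crown posets $X_n$ with $n\ge3$.
   Context: $C_2=\{x<y\}$. The $n$-crown $X_n$ has elements $a_1,\dots,a_n,b_1,\dots,b_n$ with relations exactly $a_i<b_j$ for $i\ne j$. Notation for a poset $P$: $J^-(a)=\{c:c\le a\}$, $J^+(a)=\{c:a\le c\}$; $\ell(X)$ is the cardinality of a longest chain of a poset $X$. A subset $A$ of a poset $X$ is maximally ordered in $X$ if $|\{(a,b)\in A\times A:a<b\}|$ is maximal among subsets of $X$ of cardinality $|A|$. $A\subseteq P$ is linked if for all $a<b$ in $A$, either $b$ covers $a$ or there exists $c\in J^+(a)\cap J^-(b)$ with $c\in A$. For $\sigma\in\mathrm{Aut}(P)$, $\Sigma(\sigma)=\{a:\sigma(a)\ne a\}$. For finite $Q$ and $r\ge2$: $\sigma\in\mathrm{Aut}(P)$ is a $(Q,r)$-generator if there exist subsets $S_0,\dots,S_{r-1}\subset\Sigma(\sigma)$, each isomorphic to $Q$, which are smallest maximally ordered subsets of $\Sigma(\sigma)$ with $\sigma(S_i)=S_{(i+1)\bmod r}$, $\ell(S_i)=\ell(\Sigma(\sigma))$, $\bigcup_iS_i=\Sigma(\sigma)$;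 distinct $S_i,S_j$ are $(Q,r)$-symmetric subsets. Elements $a,b$ are $(Q,r,0)$-symmetric if $a=b$; $(Q,r,1)$-symmetric if there are $(Q,r)$-symmetric subsets $A,B$ with generator $\sigma$, $a\in A$, $b=\sigma^q(a)\in B$, $1\le q<r$; for $n\ge2$, $(Q,r,n)$-symmetric if not $(Q,r,j)$-symmetric for $j<n$ but there exist $c$, $j<n$ with $a$ $(Q,r,j)$-symmetric to $c$ and $c$ $(Q,r,n-j)$-symmetric to $b$; $(Q,r)$-symmetric if $(Q,r,n)$-symmetric for some $n\ge0$ (an equivalence relation). The retract $P\oslash_rQ$ is the quotient poset of the equivalence classes with $E\le F$ iff some $e\in E$, $f\in F$ satisfy $e\le f$. For a linked subset $A\cong Q$, the $(Q,r)$-symmetry group of $A$ is the largest subgroup of $\mathrm{Aut}(P)$ of $(Q,r)$-generators whose action fixes every $b\in P$ to which no $a\in A$ is $(Q,r)$-symmetric; the $(Q,r)$-symmetry set of $A$ is the set of elements not fixed by this group. The $(Q,r)$-symmetry of a $(Q,r)$-symmetry set $S$ is composite if there exist a finite poset $\hat Q$, $\hat r\ge2$ and a $(\hat Q,\hat r)$-symmetry set $\hat S\subseteq S$ with either $\hat Q$ a proper subposet of $Q$, or $\hat Q=Q$ and $\hat r<r$; it is prime otherwise. $P\oslash'_rQ$ is the retraction using only prime $(Q,r)$-symmetries, and $[R\odot_rQ]'=\{P:P\oslash'_rQ\cong R,\ P\not\cong R\}$; for $r=2$ the index is dropped. *)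

(* Defs.v *)
From HB Require Import structures.
From Stdlib Require Import Relations.
From mathcomp Require Import all_boot all_order fingroup perm.
From mathcomp Require Import boolp.

Set Implicit Arguments.
Unset Strict Implicit.
Unset Printing Implicit Defensive.

Definition partial_order (T : Type) (le : rel T) : Prop :=
  [/\ reflexive le, antisymmetric le & transitive le].

(* Isomorphism between the induced subposet (D2, R') of W and the induced
   subposet (D1, R) of U: an order embedding g of D2 onto D1. *)
Definition iso_sub (U W : finType) (D1 : {set U}) (R : rel U)
    (D2 : {set W}) (R' : rel W) : Prop :=
  exists g : W -> U,
    [/\ {in D2 &, injective g}, g @: D2 = D1
      & {in D2 &, forall v w, R' v w = R (g v) (g w)}].

Section Basic.
Variables (T : finType) (le : rel T).

Definition ltP (x y : T) := (x != y) && le x y.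

Definition covers (a b : T) := ltP a b && [forall c, ~~ (ltP a c && ltP c b)].

Definition linked (A : {set T}) :=
  [forall a in A, forall b in A,
     ltP a b ==> (covers a b || [exists c in A, ltP a c && ltP c b])].

Definition is_chain (C : {set T}) := [forall x in C, forall y in C, le x y || le y x].

Definition ell (X : {set T}) :=
  \max_(C : {set T} | (C \subset X) && is_chain C) #|C|.

Definition npairs (A : {set T}) :=
  #|[set p : T * T | [&& p.1 \in A, p.2 \in A & ltP p.1 p.2]]|.

Definition max_ordered (X A : {set T}) :=
  (A \subset X) &&
  [forall B : {set T}, ((B \subset X) && (#|B| == #|A|)) ==> (npairs B <= npairs A)].

Definition is_aut (s : {perm T}) := [forall x, forall y, le (s x) (s y) == le x y].

Definition Sigma (s : {perm T}) := [set a | s a != a].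

Definition gen_family (s : {perm T}) (r : nat) (F : nat -> {set T}) : Prop :=
  [/\ (forall i, i < r -> max_ordered (Sigma s) (F i)),
      (forall i, i < r -> [set s x | x in F i] = F (i.+1 %% r)),
      (forall i, i < r -> ell (F i) = ell (Sigma s))
    & \bigcup_(i < r) F i = Sigma s].

End Basic.

Inductive in_gen (T : finType) (G : {perm T} -> Prop) : {perm T} -> Prop :=
  | in_gen_one : in_gen G 1%g
  | in_gen_el s : G s -> in_gen G s
  | in_gen_mul s t : in_gen G s -> in_gen G t -> in_gen G (s * t)%g
  | in_gen_inv s : in_gen G s -> in_gen G (s^-1)%g.

Section Sym.
Variables (T : finType) (le : rel T) (V : finType) (leQ : rel V).
(* Q is the induced subposet (DQ, leQ) of V *)

Definition QFam (DQ : {set V}) (r : nat) (s : {perm T}) (F : nat -> {set T}) : Prop :=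
  [/\ gen_family le s r F,
      (forall i, i < r -> iso_sub (F i) le DQ leQ)
    & (forall G, gen_family le s r G -> forall i, i < r -> #|F i| <= #|G i|)].

Definition generator (DQ : {set V}) (r : nat) (s : {perm T}) : Prop :=
  is_aut le s /\ exists F, QFam DQ r s F.

Definition step_by (DQ : {set V}) (r : nat) (s : {perm T}) (a b : T) : Prop :=
  exists F, QFam DQ r s F /\
    exists i j q, [/\ (i < r) && (j < r), F i != F j, a \in F i, b \in F j
                      & (0 < q < r) /\ b = (s ^+ q)%g a].

Definition step (DQ : {set V}) (r : nat) (a b : T) : Prop :=
  exists s, generator DQ r s /\ step_by DQ r s a b.

(* (Q,r)-symmetric = (Q,r,n)-symmetric for some n *)
Definition sym (DQ : {set V}) (r : nat) : T -> T -> Prop :=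
  clos_refl_trans T (step DQ r).

Definition symgen (DQ : {set V}) (r : nat) (A : {set T}) (s : {perm T}) : Prop :=
  generator DQ r s /\
  forall b, (forall a, a \in A -> ~ sym DQ r a b) -> s b = b.

Definition symset (DQ : {set V}) (r : nat) (A : {set T}) (b : T) : Prop :=
  exists g, in_gen (symgen DQ r A) g /\ g b != b.

Definition composite (DQ : {set V}) (r : nat) (A : {set T}) : Prop :=
  exists (DQ' : {set V}) (r' : nat) (A' : {set T}),
    [/\ (2 <= r') && linked le A', iso_sub A' le DQ' leQ,
        (exists b, symset DQ' r' A' b),
        (forall b, symset DQ' r' A' b -> symset DQ r A b)
      & (DQ' \proper DQ \/ (DQ' = DQ /\ r' < r))].

Definition pstep (DQ : {set V}) (r : nat) (a b : T) : Prop :=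
  exists A, [/\ linked le A, iso_sub A le DQ leQ, ~ composite DQ r A
              & exists s, symgen DQ r A s /\ step_by DQ r s a b].

Definition psym (DQ : {set V}) (r : nat) : T -> T -> Prop :=
  clos_refl_trans T (pstep DQ r).

Definition classes (E : T -> T -> Prop) : {set {set T}} :=
  [set [set y | `[< E x y >]] | x : T].

Definition qle (E1 E2 : {set T}) : bool := [exists e in E1, exists f in E2, le e f].

Definition prime_retract_iso (DQ : {set V}) (r : nat) (W : finType) (R : rel W) : Prop :=
  iso_sub (classes (psym DQ r)) qle [set: W] R.

End Sym.

Definition c2le : rel bool := fun x y => x ==> y.

Definition in_odot_C2_C2 (T : finType) (le : rel T) : Prop :=
  prime_retract_iso le c2le [set: bool] 2 c2le /\ ~ iso_sub [set: T] le [set: bool] c2le.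

Definition par_le (n : nat) : rel ('I_n * bool) :=
  fun x y => (x.1 == y.1) && (x.2 ==> y.2).

(* n-crown: a_i = (i,false), b_i = (i,true), a_i < b_j iff i <> j *)
Definition crown_le (n : nat) : rel ('I_n * bool) :=
  fun x y => (x == y) || [&& ~~ x.2, y.2 & x.1 != y.1].

Arguments par_le : clear implicits.
Arguments crown_le : clear implicits.

(* Main.v *)
Require Import Defs.
From Stdlib Require Import Relations.
From mathcomp Require Import all_boot all_order fingroup perm.

Set Implicit Arguments.
Unset Strict Implicit.
Unset Printing Implicit Defensive.

Section Gen.
Variables (T : finType) (le : rel T).
Hypothesis Hpo : partial_order le.

Lemma leR x : le x x. Proof. by case: Hpo. Qed.
Lemma leA x y : le x y -> le y x -> x = y.
Proof. case: Hpo => _ H _ h1 h2; apply: H; by rewrite h1 h2. Qed.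
Lemma leT x y z : le x y -> le y z -> le x z.
Proof. case: Hpo => _ _ H h1 h2; exact: H h1 h2. Qed.

Lemma is_autP s : is_aut le s -> forall x y, le (s x) (s y) = le x y.
Proof. by move=> /forallP H x y; move: (H x) => /forallP /(_ y) /eqP. Qed.

Lemma is_autI (s : {perm T}) : (forall x y, le (s x) (s y) = le x y) -> is_aut le s.
Proof. by move=> H; apply/forallP => x; apply/forallP => y; rewrite H. Qed.

Lemma is_aut_mul s t : is_aut le s -> is_aut le t -> is_aut le (s * t)%g.
Proof. move=> /is_autP hs /is_autP ht; apply: is_autI => x y; by rewrite !permM ht hs. Qed.

Lemma is_aut_inv s : is_aut le s -> is_aut le (s^-1)%g.
Proof. move=> /is_autP hs; apply: is_autI => x y; by rewrite -hs !permKV. Qed.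

Lemma is_aut1 : is_aut le 1%g.
Proof. apply: is_autI => x y; by rewrite !perm1. Qed.

Lemma is_aut_exp s n : is_aut le s -> is_aut le (s ^+ n)%g.
Proof.
move=> hs; elim: n => [|n IH]; first by rewrite expg0; exact: is_aut1.
by rewrite expgSr; apply: is_aut_mul.
Qed.

Lemma aut_ltP s x y : is_aut le s -> Defs.ltP le (s x) (s y) = Defs.ltP le x y.
Proof. move=> hs; by rewrite /Defs.ltP (is_autP hs) (inj_eq perm_inj). Qed.

Lemma in_gen_fix (G : {perm T} -> Prop) b :
  (forall s, G s -> s b = b) -> forall g, in_gen G g -> g b = b.
Proof.
move=> H g; elim => [|s Gs|s t _ h1 _ h2|s _ h].
- by rewrite perm1.
- exact: H.
- by rewrite permM h1 h2.
- by rewrite -{1}h permK.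
Qed.

Lemma ell_le_card (X : {set T}) : ell le X <= #|X|.
Proof. apply/bigmax_leqP => C /andP [h _]; exact: subset_leq_card. Qed.

Lemma ell_ge (X C : {set T}) : C \subset X -> is_chain le C -> #|C| <= ell le X.
Proof. move=> h1 h2; rewrite /ell; apply: (leq_bigmax_cond C); by rewrite h1 h2. Qed.

Lemma chain2 x y : le x y -> is_chain le [set x; y].
Proof.
move=> h; apply/forallP => a; apply/implyP => /set2P ha; apply/forallP => b;
apply/implyP => /set2P hb.
by case: ha hb => -> [] ->; rewrite ?leR ?h ?orbT.
Qed.

Lemma npairs_le0 (B : {set T}) : #|B| <= 1 -> npairs le B = 0.
Proof.
move=> /card_le1_eqP h; apply/eqP; rewrite cards_eq0; apply/eqP/setP => p.
rewrite !inE; apply/negbTE/negP => /and3P [h1 h2 /andP [h3 _]].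
by rewrite (h _ _ h1 h2) eqxx in h3.
Qed.

Lemma npairs_le1 (B : {set T}) : #|B| <= 2 -> npairs le B <= 1.
Proof.
move=> hB; apply/card_le1_eqP => [[a1 b1]] [a2 b2]; rewrite !inE /= =>
  /and3P [ha1 hb1 /andP [n1 l1]] /and3P [ha2 hb2 /andP [n2 l2]].
have key : forall c, c \in B -> [|| c == a1 | c == b1].
  move=> c hc; apply/negPn/negP; rewrite negb_or => /andP [c1 c2].
  have : #|a1 |: (b1 |: [set c])| <= #|B|.
    apply: subset_leq_card; apply/subsetP => z; rewrite !inE.
    by move=> /orP [|/orP []] /eqP ->.
  rewrite !cardsU1 !inE cards1 (negbTE n1) eq_sym (negbTE c1) eq_sym (negbTE c2) /=.
  by move=> h; move: (leq_trans h hB).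
case/orP: (key _ ha2) => /eqP e1; case/orP: (key _ hb2) => /eqP e2; subst.
- by rewrite eqxx in n2.
- by [].
- by rewrite (leA l1 l2) eqxx in n1.
- by rewrite eqxx in n2.
Qed.

Lemma npairs_ge1 x y : Defs.ltP le x y -> 0 < npairs le [set x; y].
Proof.
move=> h; rewrite /npairs card_gt0; apply/set0Pn; exists (x, y).
by rewrite !inE /= !eqxx orbT h.
Qed.

Lemma imset_bool (U : finType) (g : bool -> U) :
  [set g x | x in [set: bool]] = [set g false; g true].
Proof.
apply/setP => z; rewrite !inE; apply/imsetP/orP.
- by case=> [[]] _ ->; rewrite eqxx; [right|left].
- by case=> /eqP ->; [exists false|exists true].
Qed.

Lemma imset2 (f : T -> T) a b : [set f x | x in [set a; b]] = [set f a; f b].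
Proof. by rewrite imsetU1 imset_set1. Qed.

Lemma bigcup2 (F : nat -> {set T}) : \bigcup_(i < 2) F i = F 0 :|: F 1.
Proof. by rewrite !big_ord_recl big_ord0 setU0. Qed.

End Gen.

Section Gen2.
Variables (T : finType) (le : rel T).
Hypothesis Hpo : partial_order le.
Local Notation QF := (QFam le c2le [set: bool] 2).

Lemma qfam_struct s F : is_aut le s -> QF s F ->
  exists u v, [/\ Defs.ltP le u v, F 0 = [set u; v], F 1 = [set s u; s v],
     (forall x, s (s x) = x) & Sigma s = F 0 :|: F 1].
Proof.
move=> hs [[hmax himg hell hcup] hiso hmin].
have [g [ginj gim grel]] := hiso 0 erefl.
have F0 : F 0 = [set g false; g true] by rewrite -gim imset_bool.
have luv : le (g false) (g true) by rewrite -grel ?inE.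
have nuv : g false != g true.
  by apply/eqP => h; have := ginj false true (in_setT _) (in_setT _) h.
have F1 : F 1 = [set s (g false); s (g true)] by rewrite -(himg 0 erefl) F0 imset2.
have F00 := himg 1 erefl; rewrite F1 imset2 F0 /= in F00.
have hS : Sigma s = F 0 :|: F 1 by rewrite -hcup bigcup2.
have l2 : le (s (s (g false))) (s (s (g true))) by rewrite !(is_autP hs).
have n2 : s (s (g false)) != s (s (g true)) by rewrite !(inj_eq perm_inj).
have m1 : s (s (g false)) \in [set g false; g true] by rewrite -F00 !inE eqxx.
have m2 : s (s (g true)) \in [set g false; g true] by rewrite -F00 !inE eqxx orbT.
have [e1 e2] : s (s (g false)) = g false /\ s (s (g true)) = g true.
  move: m1 m2; rewrite !inE => /orP [] /eqP h1 /orP [] /eqP h2;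
    rewrite h1 h2 ?eqxx in n2 l2 *; try done.
  by rewrite (leA Hpo luv l2) eqxx in nuv.
exists (g false), (g true); split => //.
- by rewrite /Defs.ltP luv andbT.
- move=> x; case: (boolP (x \in Sigma s)) => hx.
  + move: hx; rewrite hS F0 F1 !inE => /orP [/orP [] | /orP []] /eqP ->;
      by rewrite ?e1 ?e2.
  + by move: hx; rewrite inE negbK => /eqP h; rewrite !h.
Qed.


Lemma step_by_struct s a b : is_aut le s -> step_by le c2le [set: bool] 2 s a b ->
  [/\ b = s a, s a != a & forall x, s (s x) = x].
Proof.
move=> hs [F [hQ [i [j [q [/andP [hi hj] hne ha hb [/andP [q0 q2] ->]]]]]]].
have -> : q = 1 by case: q q0 q2 => [|[|]].
rewrite expg1; have [u [v [_ _ _ h2 hS]]] := qfam_struct hs hQ.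
split => //.
have : a \in Sigma s.
  move: hQ => [[_ _ _ hcup] _ _]; rewrite -hcup; apply/bigcupP.
  by exists (Ordinal hi).
by rewrite inE.
Qed.

Lemma pstep_sym a b : pstep le c2le [set: bool] 2 a b -> pstep le c2le [set: bool] 2 b a.
Proof.
move=> [A [h1 h2 h3 [s [hsg hst]]]].
have hs : is_aut le s by case: hsg => [[]].
have [e1 e2 e3] := step_by_struct hs hst.
exists A; split => //; exists s; split => //.
move: hst => [F [hQ [i [j [q [/andP [hi hj] hne ha hb [hq _]]]]]]].
exists F; split => //; exists j, i, 1; split => //.
- by rewrite hj hi.
- by rewrite eq_sym.
- by rewrite expg1 e1 e3.
Qed.

Definition PS := psym le c2le [set: bool] 2.

Lemma psym_sym a b : PS a b -> PS b a.
Proof.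
elim => [x y h|x|x y z _ h1 _ h2].
- by apply: rt_step; apply: pstep_sym.
- exact: rt_refl.
- exact: rt_trans h2 h1.
Qed.

Lemma psym_trans a b c : PS a b -> PS b c -> PS a c.
Proof. exact: rt_trans. Qed.

Lemma pstep_aut a b : pstep le c2le [set: bool] 2 a b ->
  exists2 s : {perm T}, is_aut le s & [/\ b = s a, s a != a & forall x, s (s x) = x].
Proof.
move=> [A [_ _ _ [s [hsg hst]]]].
have hs : is_aut le s by case: hsg => [[]].
by exists s => //; apply: step_by_struct.
Qed.

Lemma psym_aut a b : PS a b -> exists2 r : {perm T}, is_aut le r & r a = b.
Proof.
elim => [x y h|x|x y z _ [r1 h1 e1] _ [r2 h2 e2]].
- by have [s hs [-> _ _]] := pstep_aut h; exists s.
- by exists 1%g; [exact: is_aut1|rewrite perm1].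
- by exists (r1 * r2)%g; [exact: is_aut_mul|rewrite permM e1 e2].
Qed.

Lemma pstep_sym_step a b : pstep le c2le [set: bool] 2 a b -> sym le c2le [set: bool] 2 a b.
Proof.
move=> [A [_ _ _ [s [[hg _] hst]]]]; apply: rt_step; by exists s.
Qed.

Lemma psym_sym_rel a b : PS a b -> sym le c2le [set: bool] 2 a b.
Proof.
elim => [x y h|x|x y z _ h1 _ h2].
- exact: pstep_sym_step.
- exact: rt_refl.
- exact: rt_trans h1 h2.
Qed.

End Gen2.

Section Twin.
Variables (T : finType) (le : rel T).
Hypothesis Hpo : partial_order le.

Lemma sigma_tperm (x x' : T) : x != x' -> Sigma (tperm x x') = [set x; x'].
Proof.
move=> nx; apply/setP => z; rewrite !inE.
case: (tpermP x x' z) => [->|->|h1 h2].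
- by rewrite eqxx eq_sym nx.
- by rewrite eqxx orbT nx.
- by rewrite eqxx /=; apply/esym/norP; split; apply/eqP.
Qed.

Lemma chain1 x : is_chain le [set x].
Proof.
apply/forallP => a; apply/implyP => /set1P ->; apply/forallP => b.
by apply/implyP => /set1P ->; rewrite (leR Hpo).
Qed.

Lemma ell_set1 x : ell le [set x] = 1.
Proof.
apply/eqP; rewrite eqn_leq; apply/andP; split.
- by have := ell_le_card le [set x]; rewrite cards1.
- apply: (@leq_trans #|[set x]|); first by rewrite cards1.
  apply: ell_ge => //; exact: chain1.
Qed.

Lemma ell_anti2 x x' : ~~ le x x' -> ~~ le x' x -> ell le [set x; x'] = 1.
Proof.
move=> n1 n2; apply/eqP; rewrite eqn_leq; apply/andP; split.
- apply/bigmax_leqP => C /andP [hC hch]; apply/card_le1_eqP => a b ha hb.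
  move/forallP: hch => /(_ a) /implyP /(_ ha) /forallP /(_ b) /implyP /(_ hb) hab.
  move/subsetP: hC => hC; move: (hC _ ha) (hC _ hb); rewrite !inE.
  case/orP => /eqP ea /orP [] /eqP eb; subst a b => //.
  + by move: hab; rewrite (negbTE n1) (negbTE n2).
  + by move: hab; rewrite (negbTE n1) (negbTE n2).
- apply: (@leq_trans #|[set x]|); first by rewrite cards1.
  apply: ell_ge => //.
  + by apply/subsetP => z /set1P ->; rewrite !inE eqxx.
  + exact: chain1.
Qed.

Lemma ell_set0 : ell le set0 = 0.
Proof. by apply/eqP; rewrite -leqn0; have := ell_le_card le set0; rewrite cards0. Qed.

Lemma ell_pos (X : {set T}) : 0 < ell le X -> 0 < #|X|.
Proof. move=> h; exact: leq_trans h (ell_le_card _ _). Qed.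

Lemma twin_gen x x' : x != x' -> is_aut le (tperm x x') -> ~~ le x x' -> ~~ le x' x ->
  QFam le c2le [set true] 2 (tperm x x') (fun k => if k == 0 then [set x] else [set x']).
Proof.
move=> nx ha n1 n2.
have hS := sigma_tperm nx.
have hfam : gen_family le (tperm x x') 2 (fun k => if k == 0 then [set x] else [set x']).
  split.
  - move=> i hi; apply/andP; split.
    + rewrite hS; case: (i == 0); apply/subsetP => z /set1P ->; by rewrite !inE eqxx ?orbT.
    + apply/forallP => B; apply/implyP => /andP [_ /eqP hB].
      rewrite npairs_le0 //; rewrite hB; by case: (i == 0); rewrite cards1.
  - case => [|[|//]] _ /=; by rewrite imset_set1 ?tpermL ?tpermR.
  - move=> i hi; by rewrite hS ell_anti2 //; case: (i == 0); rewrite ell_set1.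
  - by rewrite !big_ord_recl big_ord0 /= setU0 hS.
split => //.
- move=> i hi; exists (fun _ => if i == 0 then x else x'); split.
  + by move=> a b /set1P -> /set1P ->.
  + by rewrite imset_set1; case: (i == 0).
  + by move=> a b /set1P -> /set1P ->; case: (i == 0); rewrite (leR Hpo).
- move=> G [_ _ hell _] i hi.
  have : 0 < ell le (G i) by rewrite hell // hS ell_anti2.
  move/ell_pos; by case: (i == 0); rewrite cards1.
Qed.

Lemma twin_symset x x' : x != x' -> is_aut le (tperm x x') -> ~~ le x x' -> ~~ le x' x ->
  exists b, symset le c2le [set true] 2 [set x] b.
Proof.
move=> nx ha n1 n2.
have hQ := twin_gen nx ha n1 n2.
have hg : generator le c2le [set true] 2 (tperm x x') by split => //; eexists; exact: hQ.
exists x, (tperm x x'); split; last by rewrite tpermL eq_sym.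
apply: in_gen_el; split => // b hb.
case: (tpermP x x' b) => [e|e|] //.
- by exfalso; apply: (hb x); [rewrite inE|rewrite e; exact: rt_refl].
- exfalso; apply: (hb x); first by rewrite inE.
  rewrite e; apply: rt_step; exists (tperm x x'); split => //.
  exists (fun k => if k == 0 then [set x] else [set x']); split => //.
  exists 0, 1, 1; split => //=.
  + apply/negP => /eqP /setP /(_ x); rewrite !inE eqxx => /esym/eqP h.
    by rewrite h eqxx in nx.
  + by rewrite inE.
  + by rewrite inE.
  + by rewrite expg1 tpermL.
Qed.

End Twin.

Definition Mrel (c : bool) (n : nat) : rel ('I_n * bool) :=
  fun v w => (v == w) || [&& ~~ v.2, w.2 & (c == (v.1 == w.1))].
Arguments Mrel : clear implicits.

Lemma par_Mrel n : par_le n =2 Mrel true n.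
Proof.
by case=> [i [|]] [j [|]]; rewrite /par_le /Mrel /= ?xpair_eqE ?andbT ?andbF ?orbF //= ?orbb.
Qed.

Lemma crown_Mrel n : crown_le n =2 Mrel false n.
Proof.
by case=> [i [|]] [j [|]]; rewrite /crown_le /Mrel /= ?xpair_eqE //=.
Qed.

Lemma iso_sub_ext (U W : finType) (D1 : {set U}) R (D2 : {set W}) R1 R2 :
  R1 =2 R2 -> iso_sub D1 R D2 R2 -> iso_sub D1 R D2 R1.
Proof.
move=> e [g [h1 h2 h3]]; exists g; split => // v w hv hw; by rewrite e h3.
Qed.

Section Build.
Variables (T : finType) (le : rel T).
Hypothesis Hpo : partial_order le.
Variables (L0 L1 : {set T}) (c : bool).
Hypothesis hcov : forall x, (x \in L0) || (x \in L1).
Hypothesis hdis : forall x, x \in L0 -> x \in L1 -> False.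
Hypothesis ha0 : forall x y, x \in L0 -> y \in L0 -> le x y -> x = y.
Hypothesis ha1 : forall x y, x \in L1 -> y \in L1 -> le x y -> x = y.
Hypothesis h10 : forall x y, x \in L1 -> y \in L0 -> le x y = false.
Hypothesis H1 : forall a, a \in L0 -> exists y, y \in L1 /\ forall z, z \in L1 -> le a z = (c == (z == y)).
Hypothesis H2 : forall y, y \in L1 -> exists a, a \in L0 /\ forall z, z \in L1 -> le a z = (c == (z == y)).
Hypothesis H3 : forall a a', a \in L0 -> a' \in L0 -> (forall z, z \in L1 -> le a z = le a' z) -> a = a'.

Definition phi a := odflt a [pick y | (y \in L1) && [forall z in L1, le a z == (c == (z == y))]].

Lemma phiP a : a \in L0 -> phi a \in L1 /\ forall z, z \in L1 -> le a z = (c == (z == phi a)).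
Proof.
move=> ha; rewrite /phi; case: pickP => [y /andP [hy /forallP hf]|h] /=.
- by split => // z hz; move: (hf z); rewrite hz => /eqP.
- exfalso; have [y [hy hz]] := H1 ha; move: (h y); rewrite hy /=.
  move/negP; apply; apply/forallP => z; apply/implyP => hz'; by rewrite hz.
Qed.

Lemma ceq (b1 b2 : bool) : (c == b1) = (c == b2) -> b1 = b2.
Proof. by case: c b1 b2 => [] [] []. Qed.

Lemma phi_uniq a y : a \in L0 -> y \in L1 -> (forall z, z \in L1 -> le a z = (c == (z == y))) -> phi a = y.
Proof.
move=> ha hy hz; have [hp hpz] := phiP ha.
have := hpz y hy; rewrite hz // eqxx => /ceq /esym /eqP //.
Qed.

Lemma phi_inj a a' : a \in L0 -> a' \in L0 -> phi a = phi a' -> a = a'.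
Proof.
move=> ha ha' e; apply: H3 => // z hz.
have [_ h1] := phiP ha; have [_ h2] := phiP ha'; by rewrite h1 // h2 // e.
Qed.

Lemma phi_surj y : y \in L1 -> exists2 a, a \in L0 & phi a = y.
Proof. move=> hy; have [a [ha hz]] := H2 hy; exists a => //; exact: phi_uniq. Qed.

Lemma card_L1 : #|L1| = #|L0|.
Proof.
have -> : L1 = phi @: L0.
  apply/setP => y; apply/idP/imsetP.
  - by move=> hy; have [a ha e] := phi_surj hy; exists a.
  - by case=> a ha ->; have [] := phiP ha.
apply: card_in_imset => a a' ha ha'; exact: phi_inj.
Qed.

Lemma build_iso : iso_sub [set: T] le [set: 'I_#|L0| * bool] (Mrel c #|L0|).
Proof.
pose ev (i : 'I_#|L0|) : T := enum_val i.
have evP : forall i, ev i \in L0 := fun i => enum_valP i.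
pose g (v : 'I_#|L0| * bool) := if v.2 then phi (ev v.1) else ev v.1.
have phiL1 : forall i, phi (ev i) \in L1 by move=> i; have [] := phiP (evP i).
exists g; split.
- move=> [i [|]] [j [|]] _ _; rewrite /g /= => e.
  + by congr (_, _); apply: enum_val_inj; apply: phi_inj.
  + by exfalso; apply: (hdis (evP j)); rewrite -e.
  + by exfalso; apply: (hdis (evP i)); rewrite e.
  + by congr (_, _); apply: enum_val_inj.
- apply/setP => x; rewrite !inE; apply/imsetP.
  case/orP: (hcov x) => hx.
  + exists (enum_rank_in hx x, false) => //; by rewrite /g /ev /= enum_rankK_in.
  + have [a ha e] := phi_surj hx.
    exists (enum_rank_in ha a, true) => //; by rewrite /g /ev /= enum_rankK_in.
- move=> [i [|]] [j [|]] _ _; rewrite /g /Mrel /= ?xpair_eqE ?andbT ?andbF ?orbF /=.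
  + apply/idP/idP => [/eqP -> |h]; first by case: Hpo => r _ _; exact: r.
    apply/eqP; apply: enum_val_inj; apply: phi_inj => //; exact: ha1 h.
  + by rewrite h10.
  + have [_ h] := phiP (evP i); rewrite h //.
    congr (c == _); apply/idP/idP => [/eqP -> //|/eqP e].
    by apply/eqP; apply: enum_val_inj; apply: phi_inj.
  + apply/idP/idP => [/eqP -> |h]; first by case: Hpo => r _ _; exact: r.
    apply/eqP; apply: enum_val_inj; exact: ha0 h.
Qed.

End Build.

Section Fwd.
Variables (T : finType) (le : rel T).
Hypothesis Hpo : partial_order le.
Variables (L0 L1 : {set T}) (e f : T).
Hypothesis hcov : forall x, (x \in L0) || (x \in L1).
Hypothesis hP0 : forall x y, x \in L0 -> y \in L0 -> PS le x y.
Hypothesis hP1 : forall x y, x \in L1 -> y \in L1 -> PS le x y.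
Hypothesis h10 : forall x y, x \in L1 -> y \in L0 -> le x y = false.
Hypothesis he : e \in L0.
Hypothesis hf : f \in L1.
Hypothesis hef : le e f.

Lemma L_dis x : x \in L0 -> x \in L1 -> False.
Proof. by move=> h0 h1; have := h10 h1 h0; rewrite (leR Hpo). Qed.

Lemma inL1 x : (x \in L1) = (x \notin L0).
Proof.
case/orP: (hcov x) => h; rewrite h /=.
- by apply/negbTE/negP => h'; apply: (L_dis h).
- by apply/esym/negP => h'; apply: (L_dis h' h).
Qed.

Lemma aut_fix (r : {perm T}) x : is_aut le r -> le x (r x) -> r x = x.
Proof.
move=> hr hx.
have key : forall k, le (r x) ((r ^+ k.+1)%g x).
  elim => [|k IH]; first by rewrite expg1 (leR Hpo).
  apply: (leT Hpo) IH _.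
  by rewrite (expgS r k.+1) permM (is_autP (is_aut_exp k.+1 hr)).
have := key (#[r].-1)%g; rewrite prednK ?order_gt0 // expg_order perm1 => h.
exact: (leA Hpo h hx).
Qed.


Lemma anti0 x y : x \in L0 -> y \in L0 -> le x y -> x = y.
Proof.
move=> hx hy hxy; have [r hr erx] := psym_aut Hpo (hP0 hx hy).
by rewrite -erx in hxy *; rewrite (aut_fix hr hxy).
Qed.

Lemma anti1 x y : x \in L1 -> y \in L1 -> le x y -> x = y.
Proof.
move=> hx hy hxy; have [r hr erx] := psym_aut Hpo (hP1 hx hy).
by rewrite -erx in hxy *; rewrite (aut_fix hr hxy).
Qed.

Lemma below0 x z : x \in L0 -> le z x -> z = x.
Proof.
move=> hx hz; case/orP: (hcov z) => h; first exact: anti0.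
by rewrite h10 in hz.
Qed.

Lemma above1 y z : y \in L1 -> le y z -> z = y.
Proof.
move=> hy hz; case/orP: (hcov z) => h; last by apply/esym; exact: anti1.
by rewrite h10 in hz.
Qed.

Definition up x := [exists y, Defs.ltP le x y].

Lemma L0_up x : (x \in L0) = up x.
Proof.
apply/idP/idP => [hx|/existsP [y /andP [nxy lxy]]].
- have [r hr erx] := psym_aut Hpo (hP0 he hx).
  apply/existsP; exists (r f); rewrite /Defs.ltP -erx (inj_eq perm_inj) (is_autP hr) hef andbT.
  by apply/eqP => eef; apply: (L_dis he); rewrite eef.
- case/orP: (hcov x) => // hx.
  by rewrite (above1 hx lxy) eqxx in nxy.
Qed.

Lemma aut_up (r : {perm T}) x : is_aut le r -> up (r x) = up x.
Proof.
move=> hr; apply/existsP/existsP => [[y hy]|[y hy]].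
- by exists (r^-1 y)%g; rewrite -(aut_ltP _ _ hr) permKV.
- by exists (r y); rewrite aut_ltP.
Qed.

Lemma aut_L0 (r : {perm T}) x : is_aut le r -> (r x \in L0) = (x \in L0).
Proof. move=> hr; by rewrite !L0_up aut_up. Qed.

Lemma aut_L1 (r : {perm T}) x : is_aut le r -> (r x \in L1) = (x \in L1).
Proof. move=> hr; by rewrite !inL1 aut_L0. Qed.

Lemma lt01 x y : Defs.ltP le x y -> x \in L0 /\ y \in L1.
Proof.
move=> h; have hx : x \in L0 by rewrite L0_up; apply/existsP; exists y.
split => //; rewrite inL1; apply/negP => hy.
move: h => /andP [n l]; by rewrite (below0 hy l) eqxx in n.
Qed.

Lemma le0 x z : x \in L0 -> z \in L0 -> le x z = (x == z).
Proof.
move=> hx hz; apply/idP/eqP => [h|->]; [exact: anti0|exact: leR].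
Qed.

Lemma tperm_aut0 x x' : x \in L0 -> x' \in L0 -> x != x' ->
  (forall z, z \in L1 -> le x z = le x' z) -> is_aut le (tperm x x').
Proof.
move=> hx hx' nx hz; apply: is_autI => a b.
have hz' : forall z, z != x -> z != x' -> le x z = le x' z.
  move=> z n1 n2; case/orP: (hcov z) => h; last exact: hz.
  by rewrite !le0 // eq_sym (negbTE n1) eq_sym (negbTE n2).
have hb : forall z y, y \in L0 -> le z y = (z == y).
  move=> z y hy; apply/idP/eqP => [h|->]; [exact: below0|exact: leR].
case: (tpermP x x' a) => [ea|ea|na1 na2]; case: (tpermP x x' b) => [eb|eb|nb1 nb2];
  subst => //; rewrite ?(leR Hpo) //.
all: try by rewrite !le0 // eq_sym.
all: try by rewrite hz' //; apply/eqP.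
all: try by rewrite hz' //; apply/eqP; rewrite eq_sym.
all: rewrite !hb //.
all: try (case: eqP => // ?; subst; by [case: na1|case: na2]).
all: try (case: eqP => // ?; subst; by [case: nb1|case: nb2]).
all: try (case: eqP => // ?; case: eqP => // ?; subst; by [case: na1|case: na2]).
Qed.


Variables (A : {set T}) (s : {perm T}) (u v : T).
Hypothesis hA : iso_sub A le [set: bool] c2le.
Hypothesis hnc : ~ composite le c2le [set: bool] 2 A.
Hypothesis hs : is_aut le s.
Hypothesis huv : Defs.ltP le u v.
Hypothesis hs2 : forall x, s (s x) = x.
Hypothesis hSig : Sigma s = [set u; v] :|: [set s u; s v].

Lemma u0 : u \in L0. Proof. by case: (lt01 huv). Qed.
Lemma v1 : v \in L1. Proof. by case: (lt01 huv). Qed.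
Lemma su0 : s u \in L0. Proof. by rewrite aut_L0 // u0. Qed.
Lemma sv1 : s v \in L1. Proof. by rewrite aut_L1 // v1. Qed.
Lemma sun : s u != u.
Proof. have : u \in Sigma s by rewrite hSig !inE eqxx. by rewrite inE. Qed.
Lemma svn : s v != v.
Proof. have : v \in Sigma s by rewrite hSig !inE eqxx orbT. by rewrite inE. Qed.

Lemma sfix z : z != u -> z != v -> z != s u -> z != s v -> s z = z.
Proof.
move=> n1 n2 n3 n4; apply/eqP; apply/negPn/negP => h.
have : z \in Sigma s by rewrite inE.
by rewrite hSig !inE (negbTE n1) (negbTE n2) (negbTE n3) (negbTE n4).
Qed.

Lemma allsym b : symset le c2le [set: bool] 2 A b.
Proof.
have [gA [gi gim grel]] := hA.
have lA : le (gA false) (gA true) by rewrite -grel ?inE.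
have nA : gA false != gA true.
  by apply/eqP => h; have := gi false true (in_setT _) (in_setT _) h.
have [x0L y0L] : gA false \in L0 /\ gA true \in L1 by apply: lt01; rewrite /Defs.ltP nA.
have x0A : gA false \in A by rewrite -gim; apply/imsetP; exists false.
have y0A : gA true \in A by rewrite -gim; apply/imsetP; exists true.
have allrel : forall c, exists2 a, a \in A & sym le c2le [set: bool] 2 a c.
  move=> c; case/orP: (hcov c) => hc.
  - by exists (gA false) => //; apply: psym_sym_rel; apply: hP0.
  - by exists (gA true) => //; apply: psym_sym_rel; apply: hP1.
have [b' hb' nbb'] : exists2 b', PS le b b' & b != b'.
  case/orP: (hcov b) => hb.
  - case: (eqVneq b u) => [->|nbu].
    + by exists (s u); [apply: hP0; [exact: u0|exact: su0] | rewrite eq_sym sun].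
    + by exists u; [apply: hP0 => //; exact: u0|].
  - case: (eqVneq b v) => [->|nbv].
    + by exists (s v); [apply: hP1; [exact: v1|exact: sv1] | rewrite eq_sym svn].
    + by exists v; [apply: hP1 => //; exact: v1|].
have hb1 : clos_refl_trans_1n T (pstep le c2le [set: bool] 2) b b'.
  by apply: clos_rt_rt1n; exact: hb'.
destruct hb1 as [|d z' hst _]; first by rewrite eqxx in nbb'.
move: (hst) => [A' [_ _ _ [t [[hg _] hstep]]]].
have ht : is_aut le t by case: hg.
have [_ tb _] := step_by_struct Hpo ht hstep.
exists t; split => //; apply: in_gen_el; split => // c hc.
by exfalso; have [a ha hac] := allrel c; exact: hc a ha hac.
Qed.

Lemma twin_contra x x' : x \in L0 -> x' \in L0 -> x != x' ->
  (forall z, z \in L1 -> le x z = le x' z) -> False.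
Proof.
move=> hx hx' nx hz.
have ha := tperm_aut0 hx hx' nx hz.
have n1 : ~~ le x x' by apply/negP => h; rewrite (anti0 hx hx' h) eqxx in nx.
have n2 : ~~ le x' x by apply/negP => h; rewrite (anti0 hx' hx h) eqxx in nx.
have [b hb] := twin_symset Hpo nx ha n1 n2.
apply: hnc; exists [set true], 2, [set x]; split.
- apply/forallP => a; apply/implyP => /set1P ->; apply/forallP => c.
  by apply/implyP => /set1P ->; rewrite /Defs.ltP eqxx.
- exists (fun _ => x); split.
  + by move=> a c /set1P -> /set1P ->.
  + by rewrite imset_set1.
  + by move=> a c /set1P -> /set1P ->; rewrite (leR Hpo).
- by exists b.
- by move=> c _; apply: allsym.
- left; apply/properP; split; first exact: subsetT.
  by exists false; rewrite !inE.
Qed.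

Lemma nonK : le u (s v) = false.
Proof.
apply/negP => hK.
apply: (@twin_contra u (s u) u0 su0 _); first by rewrite eq_sym sun.
move=> z hz.
case: (eqVneq z v) => [->|nzv].
  by rewrite -{2}(hs2 v) (is_autP hs) hK (andP huv).2.
case: (eqVneq z (s v)) => [->|nzsv].
  by rewrite hK (is_autP hs) (andP huv).2.
rewrite -(is_autP hs) (sfix (z:=z)) //.
- apply/eqP => ez; apply: (L_dis u0); by rewrite -ez.
- apply/eqP => ez; apply: (L_dis su0); by rewrite -ez.
Qed.


Definition pres (g : T -> T) := forall a, a \in L0 ->
  exists a', a' \in L0 /\ forall y, y \in L1 -> le a' y = le a (g y).

Lemma pres_comp g h : pres g -> pres h -> (forall y, y \in L1 -> h y \in L1) ->
  pres (fun y => g (h y)).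
Proof.
move=> pg ph hh a ha; have [a' [ha' e1]] := pg a ha; have [a'' [ha'' e2]] := ph a' ha'.
by exists a''; split => // y hy; rewrite e2 // e1 // hh.
Qed.

Lemma pres_ext g h : pres g -> (forall y, y \in L1 -> g y = h y) -> pres h.
Proof.
move=> pg eg a ha; have [a' [ha' e1]] := pg a ha; by exists a'; split => // y hy; rewrite e1 // eg.
Qed.

Lemma tperm_conj (a b c z : T) : a != b -> b != c -> a != c ->
  tperm a c z = tperm a b (tperm b c (tperm a b z)).
Proof.
move=> nab nbc nac.
have nba : b != a by rewrite eq_sym.
have ncb : c != b by rewrite eq_sym.
have nca : c != a by rewrite eq_sym.
case: (eqVneq z a) => [->|nza]; first by rewrite !tpermL (tpermD nac nbc).
case: (eqVneq z b) => [->|nzb]; first by rewrite (tpermD nab ncb) tpermR (tpermD nba nca) tpermL.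
case: (eqVneq z c) => [->|nzc]; first by rewrite tpermR (tpermD nac nbc) tpermR tpermR.
have h1 : a != z by rewrite eq_sym.
have h2 : b != z by rewrite eq_sym.
have h3 : c != z by rewrite eq_sym.
by rewrite !tpermD.
Qed.

Lemma tperm_L1 a b y : a \in L1 -> b \in L1 -> y \in L1 -> tperm a b y \in L1.
Proof. by move=> ha hb hy; case: tpermP. Qed.

Lemma gen_pres t F y : is_aut le t -> QFam le c2le [set: bool] 2 t F ->
  y \in L1 -> t y != y -> pres (tperm y (t y)).
Proof.
move=> ht hQ hy nty.
have [u' [v' [luv F0 F1 t2 hS]]] := qfam_struct Hpo ht hQ.
rewrite F0 F1 in hS.
have [u'0 v'1] := lt01 luv.
have tu'0 : t u' \in L0 by rewrite aut_L0.
have yS : (y == v') || (y == t v').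
  have : y \in Sigma t by rewrite inE.
  rewrite hS !inE => /orP [/orP [] /eqP ez|/orP [] /eqP ez]; subst; rewrite ?eqxx ?orbT //.
  - by case: (L_dis u'0 hy).
  - by case: (L_dis tu'0 hy).
have key : forall z, z \in L1 -> t z = tperm y (t y) z.
  move=> z hz; case: (tpermP y (t y) z) => [ez|ez|n1 n2]; rewrite ?ez ?t2 //.
  apply: (@eqP _ _ z) ; apply/negPn/negP => hzs.
  have : z \in Sigma t by rewrite inE.
  rewrite hS !inE => /orP [/orP [] /eqP ez|/orP [] /eqP ez].
  - by case: (L_dis u'0); rewrite -ez.
  - by case/orP: yS => /eqP ey; [apply: n1; rewrite ez ey|apply: n2; rewrite ey t2 ez].
  - by case: (L_dis tu'0); rewrite -ez.
  - by case/orP: yS => /eqP ey; [apply: n2; rewrite ey ez|apply: n1; rewrite ey ez].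
move=> a ha; exists (t a); split; first by rewrite aut_L0.
move=> z hz; by rewrite -key // -{1}(t2 z) (is_autP ht).
Qed.

Lemma rel_L1 y z : y \in L1 -> z \in L1 -> PS le y z -> y = z \/ pres (tperm y z).
Proof.
move=> hy hz hyz.
have h1 : clos_refl_trans_1n T (pstep le c2le [set: bool] 2) y z.
  by apply: clos_rt_rt1n; exact: hyz.
elim: h1 hy hz => [y' _ _|y' w z' hst _ IH hy' hz']; first by left.
move: (hst) => [A' [_ _ _ [t [[[ht [F hQ]] _] hstep]]]].
have [ew nty _] := step_by_struct Hpo ht hstep.
have hw : w \in L1 by rewrite ew aut_L1.
have pyw : pres (tperm y' w) by rewrite ew; exact: gen_pres hQ hy' nty.
case: (IH hw hz') => [ewz|pwz]; first by right; rewrite -ewz.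
case: (eqVneq y' z') => [|nyz]; first by left.
case: (eqVneq w z') => [ewz|nwz]; first by right; rewrite -ewz.
right; apply: (pres_ext (g := fun x => tperm y' w (tperm w z' (tperm y' w x)))).
- apply: pres_comp => //; first apply: pres_comp => //.
  + by move=> x hx; repeat apply: tperm_L1.
  + by move=> x hx; repeat apply: tperm_L1.
- move=> x hx; rewrite -tperm_conj //; by rewrite ew eq_sym.
Qed.


Lemma H3gen a a' : a \in L0 -> a' \in L0 -> (forall z, z \in L1 -> le a z = le a' z) -> a = a'.
Proof.
move=> ha ha' hz; case: (eqVneq a a') => // n; exfalso; exact: twin_contra ha ha' n hz.
Qed.

Lemma H1gen (c : bool) y0 : y0 \in L1 -> (forall z, z \in L1 -> le u z = (c == (z == y0))) ->
  forall a, a \in L0 -> exists y, y \in L1 /\ forall z, z \in L1 -> le a z = (c == (z == y)).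
Proof.
move=> hy0 hu a ha; have [r hr era] := psym_aut Hpo (hP0 u0 ha).
exists (r y0); split; first by rewrite aut_L1.
move=> z hz; rewrite -era -{1}(permKV r z) (is_autP hr) hu; last by rewrite aut_L1 // is_aut_inv.
by rewrite -(inj_eq (@perm_inj _ r)) permKV.
Qed.

Lemma H2gen (c : bool) y0 : y0 \in L1 -> (forall z, z \in L1 -> le u z = (c == (z == y0))) ->
  forall y, y \in L1 -> exists a, a \in L0 /\ forall z, z \in L1 -> le a z = (c == (z == y)).
Proof.
move=> hy0 hu y hy; case: (rel_L1 hy0 hy (hP1 hy0 hy)) => [<-|pr]; first by exists u; split => //; exact: u0.
have [a' [ha' e1]] := pr u u0; exists a'; split => // z hz.
rewrite e1 // hu; last exact: tperm_L1.
by rewrite -[X in _ == (_ == X)](tpermR y0 y) (inj_eq perm_inj).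
Qed.

Lemma fwd_main :
  (exists n : nat, 2 <= n /\ iso_sub [set: T] le [set: ('I_n * bool)%type] (par_le n)) \/
  (exists n : nat, 3 <= n /\ iso_sub [set: T] le [set: ('I_n * bool)%type] (crown_le n)).
Proof.
have hdis := L_dis.
case: (boolP [exists t in L1, (t != v) && (t != s v) && le u t]) => [/existsP [t /andP [ht /andP [/andP [ntv ntsv] lut]]]|hno].
- right.
  have Nu : forall z, z \in L1 -> le u z = (false == (z == s v)).
    move=> z hz; case: (eqVneq z (s v)) => [->|nzs]; first by rewrite nonK ?eqxx.
    case: (eqVneq z v) => [->|nzv]; first by rewrite (andP huv).2.
    case: (eqVneq z t) => [->|nzt]; first by rewrite lut.
    apply/negPn/negP => nuz.
    case: (rel_L1 ht hz (hP1 ht hz)) => [etz|pr]; first by rewrite etz eqxx in nzt.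
    have [a' [ha' e1]] := pr u u0.
    have l1 : le a' z by rewrite e1 // tpermR.
    have l2 : le a' v by rewrite e1 ?v1 // (tpermD ntv nzv) (andP huv).2.
    have l3 : le a' (s v) = false by rewrite e1 ?sv1 // (tpermD ntsv nzs) nonK.
    have n1 : a' != u by apply/eqP => ea; rewrite ea in l1; by rewrite l1 in nuz.
    have n2 : a' != s u.
      apply/eqP => ea; move: l2; rewrite ea -(hs2 v) (is_autP hs) nonK //.
    have n3 : a' != v by apply/eqP => ea; apply: (hdis a') => //; rewrite ea v1.
    have n4 : a' != s v by apply/eqP => ea; apply: (hdis a') => //; rewrite ea sv1.
    have := sfix n1 n3 n2 n4 => fa.
    by move: l2; rewrite -(is_autP hs a' v) fa l3.
  have hH1 := H1gen sv1 Nu.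
  have hH2 := H2gen sv1 Nu.
  exists #|L0|; split.
  + rewrite -(card_L1 hH1 hH2 H3gen).
    have : #|v |: (s v |: [set t])| <= #|L1|.
      apply: subset_leq_card; apply/subsetP => z; rewrite !inE.
      by case/orP => [|/orP []] /eqP ->; rewrite ?v1 ?sv1.
    apply: leq_trans; rewrite !cardsU1 cards1 !inE.
    by rewrite (eq_sym v (s v)) (negbTE svn) (eq_sym v t) (negbTE ntv) (eq_sym (s v) t) (negbTE ntsv).
  + apply: iso_sub_ext (@crown_Mrel _) _.
    exact: (build_iso Hpo hcov hdis anti0 anti1 h10 hH1 hH2 H3gen).
- left.
  have Nu : forall z, z \in L1 -> le u z = (true == (z == v)).
    move=> z hz; case: (eqVneq z v) => [->|nzv]; first by rewrite (andP huv).2.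
    case: (eqVneq z (s v)) => [->|nzs]; first by rewrite nonK.
    apply/negP => luz; move/existsP: hno; apply; exists z; by rewrite hz nzv nzs luz.
  have hH1 := H1gen v1 Nu.
  have hH2 := H2gen v1 Nu.
  exists #|L0|; split.
  + have : #|[set u; s u]| <= #|L0|.
      apply: subset_leq_card; apply/subsetP => z; rewrite !inE.
      by case/orP => /eqP ->; rewrite ?u0 ?su0.
    by apply: leq_trans; rewrite cards2 eq_sym sun.
  + apply: iso_sub_ext (@par_Mrel _) _.
    exact: (build_iso Hpo hcov hdis anti0 anti1 h10 hH1 hH2 H3gen).
Qed.

End Fwd.

From Stdlib Require Import Classical.
From mathcomp Require Import boolp.

Lemma fwd_dir (T : finType) (le : rel T) (Hpo : partial_order le) :
  in_odot_C2_C2 le ->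
  ((exists n : nat, 2 <= n /\ iso_sub [set: T] le [set: ('I_n * bool)%type] (par_le n)) \/
   (exists n : nat, 3 <= n /\ iso_sub [set: T] le [set: ('I_n * bool)%type] (crown_le n))).
Proof.
case => [[g [ginj gim grel]] Hnc2].
have memc : forall x, [set y | `[< PS le x y >]] \in [set g false; g true].
  by move=> x; rewrite -imset_bool gim; apply/imsetP; exists x.
have selfc : forall x, x \in [set y | `[< PS le x y >]].
  by move=> x; rewrite inE; apply/asboolP; exact: rt_refl.
have hcov : forall x, (x \in g false) || (x \in g true).
  by move=> x; case/set2P: (memc x) => E; move: (selfc x); rewrite E => ->; rewrite ?orbT.
have hP : forall b x y, x \in g b -> y \in g b -> PS le x y.
  move=> b x y hx hy.
  have : g b \in Defs.classes (psym le c2le [set: bool] 2) by rewrite -gim; apply/imsetP; exists b.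
  case/imsetP => z _ E; move: hx hy; rewrite E !inE => /asboolP h1 /asboolP h2.
  exact: psym_trans (psym_sym Hpo h1) h2.
have h10 : forall x y, x \in g true -> y \in g false -> le x y = false.
  move=> x y hx hy; apply/negP => h.
  have : qle le (g true) (g false).
    by apply/existsP; exists x; rewrite hx; apply/existsP; exists y; rewrite hy h.
  by rewrite -grel ?inE.
have : qle le (g false) (g true) by rewrite -grel ?inE.
case/existsP => e /andP [he /existsP [f /andP [hf hef]]].
case: (Classical_Prop.classic (exists a b, pstep le c2le [set: bool] 2 a b)) => [[a [b hab]]|nst].
- move: hab => [A [_ hA hnc [s [[[hs [F hQ]] _] _]]]].
  have [u [v [huv F0 F1 hs2 hSig]]] := qfam_struct Hpo hs hQ.
  rewrite F0 F1 in hSig.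
  exact: (fwd_main Hpo hcov (hP false) (hP true) h10 he hf hef hA hnc hs huv hs2 hSig).
- exfalso; apply: Hnc2.
  have ps_eq : forall x y, PS le x y -> x = y.
    move=> x y; elim => [x' y' h|//|x' y' z' _ -> _ ->] //.
    by case: nst; exists x', y'.
  have hdis := L_dis Hpo h10.
  have nef : e != f by apply/eqP => E; apply: (hdis e) => //; rewrite E.
  exists (fun b => if b then f else e); split.
  + by move=> [] [] _ _ //= E; rewrite E eqxx in nef.
  + rewrite imset_bool; apply/setP => x; rewrite !inE.
    case/orP: (hcov x) => hx.
    * by rewrite -(ps_eq _ _ (hP false _ _ he hx)) eqxx.
    * by rewrite -(ps_eq _ _ (hP true _ _ hf hx)) eqxx orbT.
  + move=> [] [] _ _ /=; by rewrite ?(leR Hpo) ?hef ?h10.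
Qed.

From mathcomp Require Import zify.

Section Bwd.
Variables (T : finType) (le : rel T).
Hypothesis Hpo : partial_order le.
Variables (m : nat) (c : bool) (g : 'I_m.+2 * bool -> T) (h : T -> 'I_m.+2 * bool).
Hypothesis ghK : cancel g h.
Hypothesis hgK : cancel h g.
Hypothesis grel : forall v w, le (g v) (g w) = Mrel c m.+2 v w.

Let ginj : injective g := can_inj ghK.
Let hinj : injective h := can_inj hgK.

Lemma leE x y : le x y = Mrel c m.+2 (h x) (h y).
Proof. by rewrite -{1}(hgK x) -{1}(hgK y) grel. Qed.

Definition lev x := (h x).2.

Lemma levg w : lev (g w) = w.2.
Proof. by rewrite /lev ghK. Qed.

Lemma B1 x y : le x y -> x != y -> ~~ lev x /\ lev y.
Proof.
rewrite leE /Mrel (inj_eq hinj) => h1 h2; move: h1; rewrite (negbTE h2) /=.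
by case/and3P.
Qed.

Lemma B1lt x y : Defs.ltP le x y -> ~~ lev x /\ lev y.
Proof. by case/andP => h1 h2; apply: B1 => //; rewrite eq_sym. Qed.

Definition ord1' : 'I_m.+2 := Ordinal (isT : 1 < m.+2).
Definition oth (i : 'I_m.+2) : 'I_m.+2 := if i == ord0 then ord1' else ord0.
Lemma oth_ne i : i != oth i.
Proof. by rewrite /oth; case: (eqVneq i ord0) => [->|ne]. Qed.

Definition partner (i j : 'I_m.+2) := if c then i else j.

Lemma Mrel_partner i j : i != j -> Mrel c m.+2 (i, false) (partner i j, true) /\
  Mrel c m.+2 (j, false) (partner i j, true) = false.
Proof.
move=> nij; rewrite /Mrel /partner /= !xpair_eqE /= !andbF /=.
have nji : (j == i) = false by rewrite eq_sym (negbTE nij).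
by case: c => /=; rewrite ?eqxx ?(negbTE nij) ?nji.
Qed.

Definition upb x := [exists y, Defs.ltP le x y].

Lemma up_lev x : upb x = ~~ lev x.
Proof.
apply/existsP/idP => [[y hy]|hx]; first by case: (B1lt hy).
exists (g (partner (h x).1 (oth (h x).1), true)).
have [h1 _] := Mrel_partner (oth_ne (h x).1).
rewrite /Defs.ltP leE ghK; apply/andP; split.
- apply/eqP => e; move: hx; by rewrite /lev e ghK.
- by move: h1; rewrite /lev in hx; case: (h x) hx => i [] //.
Qed.

Lemma aut_lev (r : {perm T}) x : is_aut le r -> lev (r x) = lev x.
Proof.
move=> hr; apply: negb_inj; rewrite -!up_lev.
apply/existsP/existsP => [[y hy]|[y hy]].
- by exists (r^-1 y)%g; rewrite -(aut_ltP _ _ hr) permKV.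
- by exists (r y); rewrite aut_ltP.
Qed.

Lemma chain_le2 (C : {set T}) : is_chain le C -> #|C| <= 2.
Proof.
move=> hC.
have k : forall b, #|C :&: [set x | lev x == b]| <= 1.
  move=> b; apply/card_le1_eqP => x y; rewrite !inE => /andP [hx /eqP ex] /andP [hy /eqP ey].
  move/forallP: hC => /(_ x) /implyP /(_ hx) /forallP /(_ y) /implyP /(_ hy) /orP [] l;
    case: (eqVneq x y) => // n.
  + by have [] := B1 l n; rewrite ex ey => /negP.
  + by have [] := B1 l (contra_neq (@esym _ _ _) n); rewrite ex ey => /negP.
rewrite -(cardsID [set x | lev x == true] C).
have -> : C :\: [set x | lev x == true] = C :&: [set x | lev x == false].
  by apply/setP => x; rewrite !inE; case: (lev x); rewrite /= ?andbT ?andbF.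
by rewrite -(addn1 1); apply: leq_add.
Qed.

Lemma ell_le2 (X : {set T}) : ell le X <= 2.
Proof. apply/bigmax_leqP => C /andP [_ hC]; exact: chain_le2. Qed.


Definition sig_ij (i j : 'I_m.+2) (w : 'I_m.+2 * bool) := (tperm i j w.1, w.2).

Lemma sig_inj i j : injective (sig_ij i j).
Proof. by move=> [k b] [k' b'] [/perm_inj -> ->]. Qed.

Definition swf i j x := g (sig_ij i j (h x)).

Lemma swf_inj i j : injective (swf i j).
Proof. by move=> x y /ginj /sig_inj /hinj. Qed.

Definition sw i j : {perm T} := perm (@swf_inj i j).

Lemma swE i j w : sw i j (g w) = g (sig_ij i j w).
Proof. by rewrite permE /swf ghK. Qed.

Lemma Mrel_sig i j v w : Mrel c m.+2 (sig_ij i j v) (sig_ij i j w) = Mrel c m.+2 v w.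
Proof.
case: v w => [k b] [k' b']; rewrite /Mrel /sig_ij /= !xpair_eqE.
by rewrite (inj_eq perm_inj).
Qed.

Lemma sw_aut i j : is_aut le (sw i j).
Proof.
apply: is_autI => x y; rewrite -(hgK x) -(hgK y) !swE !grel; exact: Mrel_sig.
Qed.

Lemma iso_pair u v : le u v -> ~~ lev u -> lev v -> iso_sub [set u; v] le [set: bool] c2le.
Proof.
move=> luv hu hv.
have nuv : u != v by apply/eqP => e; rewrite e hv in hu.
exists (fun b => if b then v else u); split.
- by move=> [] [] _ _ //= e; rewrite e eqxx in nuv.
- by rewrite imset_bool.
- move=> [] [] _ _ /=; rewrite ?(leR Hpo) ?luv //.
  symmetry; apply/negP => l; have [] := B1 l; first by rewrite eq_sym.
  by rewrite hv.
Qed.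

Lemma maxo (X A : {set T}) : A \subset X -> #|A| = 2 -> 0 < npairs le A -> max_ordered le X A.
Proof.
move=> hAX hA hp; apply/andP; split => //; apply/forallP => B; apply/implyP => /andP [_ /eqP hB].
apply: (leq_trans _ hp); apply: (npairs_le1 Hpo); by rewrite hB hA.
Qed.

Section Swap.
Variables (i j : 'I_m.+2).
Hypothesis nij : i != j.

Definition F0 := [set g (i, false); g (partner i j, true)].
Definition F1 := [set g (j, false); g (partner j i, true)].
Definition FF (k : nat) := if k == 0 then F0 else F1.

Lemma nji : j != i. Proof. by rewrite eq_sym. Qed.

Lemma tp_partner : tperm i j (partner i j) = partner j i.
Proof. by rewrite /partner; case: c; rewrite ?tpermL ?tpermR. Qed.
Lemma tp_partner' : tperm i j (partner j i) = partner i j.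
Proof. by rewrite /partner; case: c; rewrite ?tpermL ?tpermR. Qed.

Lemma img01 : [set sw i j x | x in F0] = F1.
Proof. by rewrite imset2 !swE /sig_ij /= tpermL tp_partner. Qed.
Lemma img10 : [set sw i j x | x in F1] = F0.
Proof. by rewrite imset2 !swE /sig_ij /= tpermR tp_partner'. Qed.

Lemma Sig_sw : Sigma (sw i j) = F0 :|: F1.
Proof.
apply/setP => x; rewrite -(hgK x); case: (h x) => k b.
rewrite !inE swE (inj_eq ginj) !(inj_eq ginj) /sig_ij /= !xpair_eqE /partner.
case: (tpermP i j k) => [->|->|n1 n2].
- have := nji; rewrite /= => /negbTE e1; have e2 := negbTE nij.
  by rewrite e1 e2 eqxx; case: b; case: c; rewrite /= ?eqxx ?e1 ?e2 ?orbT.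
- have := nji; rewrite /= => /negbTE e1; have e2 := negbTE nij.
  by rewrite e1 e2 eqxx; case: b; case: c; rewrite /= ?eqxx ?e1 ?e2 ?orbT.
- rewrite eqxx /=; move/eqP: n1 => n1; move/eqP: n2 => n2.
  by rewrite (negbTE n1) (negbTE n2); case: b; case: c; rewrite /= ?(negbTE n1) ?(negbTE n2) ?andbF.
Qed.

Lemma lt_F0 : le (g (i, false)) (g (partner i j, true)).
Proof. by rewrite grel; case: (Mrel_partner nij). Qed.
Lemma lt_F1 : le (g (j, false)) (g (partner j i, true)).
Proof. by rewrite grel; case: (Mrel_partner nji). Qed.

Lemma neq_lev (w w' : 'I_m.+2 * bool) : w.2 != w'.2 -> g w != g w'.
Proof. move=> n; apply: contra n => /eqP /ginj -> //. Qed.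

Lemma card_F k : #|FF k| = 2.
Proof.
by rewrite /FF; case: (k == 0); rewrite cards2 neq_lev.
Qed.

Lemma npairs_F k : 0 < npairs le (FF k).
Proof.
rewrite /FF; case: (k == 0); apply: npairs_ge1; rewrite /Defs.ltP neq_lev //.
- exact: lt_F0.
- exact: lt_F1.
Qed.

Lemma ell_F k : ell le (FF k) = 2.
Proof.
apply/eqP; rewrite eqn_leq ell_le2 /= -{1}(card_F k); apply: ell_ge => //.
rewrite /FF; case: (k == 0); apply: (chain2 Hpo); [exact: lt_F0|exact: lt_F1].
Qed.

Lemma ell_Sig : ell le (Sigma (sw i j)) = 2.
Proof.
apply/eqP; rewrite eqn_leq ell_le2 /= -(card_F 0); apply: ell_ge.
- by rewrite Sig_sw /FF /=; exact: subsetUl.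
- apply: (chain2 Hpo); exact: lt_F0.
Qed.

Lemma QF_sw : QFam le c2le [set: bool] 2 (sw i j) FF.
Proof.
have hfam : gen_family le (sw i j) 2 FF.
  split.
  - move=> k hk; apply: maxo; rewrite ?card_F ?npairs_F //.
    rewrite Sig_sw /FF; case: (k == 0); [exact: subsetUl|exact: subsetUr].
  - by case=> [|[|//]] _ /=; rewrite /FF /= ?img01 ?img10.
  - by move=> k _; rewrite ell_F ell_Sig.
  - by rewrite bigcup2 /FF /= Sig_sw.
split => //.
- move=> k _; rewrite /FF; case: (k == 0); apply: iso_pair; rewrite ?levg //.
  + exact: lt_F0.
  + exact: lt_F1.
- move=> G [_ _ hell _] k hk; rewrite card_F.
  apply: (leq_trans _ (ell_le_card le (G k))); by rewrite hell // ell_Sig.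
Qed.

Lemma gen_sw : generator le c2le [set: bool] 2 (sw i j).
Proof. split; [exact: sw_aut|exists FF; exact: QF_sw]. Qed.

Lemma step_sw b : step_by le c2le [set: bool] 2 (sw i j) (g (i, b)) (g (j, b)).
Proof.
exists FF; split; first exact: QF_sw.
have F01 : FF 0 != FF 1.
  rewrite /FF /=; apply/negP => /eqP /setP /(_ (g (i, false))).
  rewrite !inE !(inj_eq ginj) !xpair_eqE /= eqxx (negbTE nij) /= andbF.
  by [].
case: b.
- case hc : c.
  + exists 0, 1, 1; split => //.
    * by rewrite /FF /= !inE /partner hc eqxx orbT.
    * by rewrite /FF /= !inE /partner hc eqxx orbT.
    * by rewrite expg1 swE /sig_ij /= tpermL.
  + exists 1, 0, 1; split => //; first by rewrite eq_sym.
    * by rewrite /FF /= !inE /partner hc eqxx orbT.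
    * by rewrite /FF /= !inE /partner hc eqxx orbT.
    * by rewrite expg1 swE /sig_ij /= tpermL.
- exists 0, 1, 1; split => //.
  + by rewrite /FF /= !inE eqxx.
  + by rewrite /FF /= !inE eqxx.
  + by rewrite expg1 swE /sig_ij /= tpermL.
Qed.

End Swap.

Lemma MrelFT a b : Mrel c m.+2 (a, false) (b, true) = (c == (a == b)).
Proof. by rewrite /Mrel /= xpair_eqE andbF. Qed.

Lemma sym_lev x y : lev x = lev y -> sym le c2le [set: bool] 2 x y.
Proof.
rewrite -(hgK x) -(hgK y) !levg; case: (h x) => i b; case: (h y) => j b' /= ->.
case: (eqVneq i j) => [->|nij]; first exact: rt_refl.
apply: rt_step; exists (sw i j); split; [exact: gen_sw|exact: step_sw].
Qed.

Lemma moved_chain (t : {perm T}) b : is_aut le t -> t b != b -> 1 < ell le (Sigma t).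
Proof.
move=> ht ntb.
suff [x [y [hx hy lxy nxy]]] : exists x y, [/\ x \in Sigma t, y \in Sigma t, le x y & x != y].
  apply: (@leq_trans #|[set x; y]|); first by rewrite cards2 nxy.
  apply: ell_ge; last exact: (chain2 Hpo).
  by apply/subsetP => z /set2P [] ->.
move: ntb; rewrite -(hgK b); move: (h b) => [k be] ntb.
case E : (h (t (g (k, be)))) => [k' be'].
have tb : t (g (k, be)) = g (k', be') by rewrite -E hgK.
have ebe : be' = be by rewrite -[be'](levg (k', be')) -tb aut_lev // levg.
subst be'.
have nkk : k != k' by apply/eqP => ekk; subst k'; by rewrite tb eqxx in ntb.
pose p := if c then k else k'.
have nk1 : (k == k') = false by apply/negbTE.
have nk2 : (k' == k) = false by rewrite eq_sym; apply/negbTE.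
have e1 : Mrel c m.+2 (k, false) (p, true) by rewrite MrelFT /p; case: c => /=; rewrite ?eqxx ?nk1 ?nk2.
have e2 : Mrel c m.+2 (k', false) (p, true) = false.
  by rewrite MrelFT /p; case: c => /=; rewrite ?eqxx ?nk1 ?nk2.
have e3 : Mrel c m.+2 (p, false) (k, true) by rewrite MrelFT /p; case: c => /=; rewrite ?eqxx ?nk1 ?nk2.
have e4 : Mrel c m.+2 (p, false) (k', true) = false.
  by rewrite MrelFT /p; case: c => /=; rewrite ?eqxx ?nk1 ?nk2.
have inS : forall z, t z != z -> z \in Sigma t by move=> z; rewrite inE.
clear E; case: be tb ntb => tb ntb.
- exists (g (p, false)), (g (k, true)); split.
  + apply: inS; apply/eqP => fx.
    have := is_autP ht (g (p, false)) (g (k, true)).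
    by rewrite fx tb !grel e3 e4.
  + exact: inS.
  + by rewrite grel.
  + by apply: neq_lev.
- exists (g (k, false)), (g (p, true)); split.
  + exact: inS.
  + apply: inS; apply/eqP => fy.
    have := is_autP ht (g (k, false)) (g (p, true)).
    by rewrite fy tb !grel e1 e2.
  + by rewrite grel.
  + by apply: neq_lev.
Qed.

Lemma noncomp A : ~ composite le c2le [set: bool] 2 A.
Proof.
move=> [DQ' [r' [A' [/andP [hr' _] _ [b [g0 [hg0 ng0]]] _ hpr]]]].
have hDQ : #|DQ'| <= 1.
  case: hpr => [hp|[_ hr]]; last by rewrite ltnNge hr' in hr.
  by have := proper_card hp; rewrite cardsT card_bool.
case: (Classical_Prop.classic (exists t, symgen le c2le DQ' r' A' t /\ t b != b)) => [[t [[[ht [F' [[_ _ hell hcup] hiso _]]] _] ntb]]|nt].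
- have hm := moved_chain ht ntb.
  have hbS : b \in Sigma t by rewrite inE.
  move: hbS; rewrite -hcup => /bigcupP [i _ hbi].
  rewrite -(hell i (ltn_ord i)) in hm.
  have [g' [_ gim' _]] := hiso i (ltn_ord i).
  have h1 : #|F' i| <= 1 by rewrite -gim'; exact: leq_trans (leq_imset_card _ _) hDQ.
  by have := leq_trans hm (leq_trans (ell_le_card le (F' i)) h1).
- move/negP: ng0; apply; apply/eqP; apply: (in_gen_fix (G := symgen le c2le DQ' r' A')) => // t ht.
  by apply/eqP/negPn/negP => ntb; apply: nt; exists t.
Qed.

Lemma linked_all (A : {set T}) : linked le A.
Proof.
apply/forallP => a; apply/implyP => _; apply/forallP => b; apply/implyP => _.
apply/implyP => hab; apply/orP; left; rewrite /covers hab /=.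
apply/forallP => z; apply/negP => /andP [h1 h2].
have [_ l1] := B1lt h1; have [l2 _] := B1lt h2.
by rewrite l1 in l2.
Qed.

Lemma pstep_lev x y : lev x = lev y -> x != y -> pstep le c2le [set: bool] 2 x y.
Proof.
rewrite -(hgK x) -(hgK y) !levg; case: (h x) => i b; case: (h y) => j b' /= eb.
subst b'; move=> nxy.
have nij : i != j by apply: contraNneq nxy => ->.
exists (F0 i j); split.
- exact: linked_all.
- apply: iso_pair; rewrite ?levg //; exact: lt_F0.
- exact: noncomp.
- exists (sw i j); split; last exact: step_sw.
  split; first exact: gen_sw.
  move=> z hz; exfalso; case hlz : (lev z).
  + apply: (hz (g (partner i j, true))); first by rewrite !inE eqxx orbT.
    by apply: sym_lev; rewrite levg.
  + apply: (hz (g (i, false))); first by rewrite !inE eqxx.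
    by apply: sym_lev; rewrite levg.
Qed.

Lemma psym_levE x y : PS le x y <-> lev x = lev y.
Proof.
split.
- move=> hxy; have [r hr <-] := psym_aut Hpo hxy; by rewrite aut_lev.
- move=> e; case: (eqVneq x y) => [->|nxy]; first exact: rt_refl.
  by apply: rt_step; apply: pstep_lev.
Qed.

Lemma bwd_main : in_odot_C2_C2 le.
Proof.
split.
- exists (fun b => [set y | lev y == b]); split.
  + move=> b b' _ _ /setP /(_ (g (ord0, b))); rewrite !inE levg eqxx.
    by move/esym/eqP.
  + apply/setP => Y; apply/imsetP/imsetP => [[b _ ->]|[x _ ->]].
    * exists (g (ord0, b)) => //; apply/setP => y; rewrite !inE.
      apply/idP/asboolP => [/eqP e|/psym_levE].
      + by apply/psym_levE; rewrite levg e.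
      + by rewrite levg /= => ->.
    * exists (lev x); first by rewrite in_setT.
      apply/setP => y; rewrite !inE.
      apply/asboolP/eqP => [/psym_levE -> //|e].
      by apply/psym_levE; rewrite e.
  + move=> [] [] _ _; rewrite /qle /=.
    * symmetry; apply/existsP; exists (g (ord0, true)); rewrite !inE levg /=.
      by apply/existsP; exists (g (ord0, true)); rewrite !inE levg /= (leR Hpo).
    * symmetry; apply/negbTE/negP; case/existsP => x /andP [hx]; case/existsP => y /andP [hy lxy].
      rewrite !inE in hx hy; case: (eqVneq x y) => [exy|nxy].
      - by move: hx hy; rewrite exy => /eqP ->.
      - by have [] := B1 lxy nxy; rewrite (eqP hx).
    * symmetry; apply/existsP; exists (g (ord0, false)); rewrite !inE levg /=.
      apply/existsP; exists (g (partner ord0 (oth ord0), true)); rewrite !inE levg /=.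
      by rewrite grel; case: (Mrel_partner (oth_ne ord0)).
    * symmetry; apply/existsP; exists (g (ord0, false)); rewrite !inE levg /=.
      by apply/existsP; exists (g (ord0, false)); rewrite !inE levg /= (leR Hpo).
- move=> [g' [_ gim' _]].
  have h1 : #|[set: T]| <= 2.
    by rewrite -gim'; apply: leq_trans (leq_imset_card _ _) _; rewrite cardsT card_bool.
  have h2 : #|[set g w | w in [set: 'I_m.+2 * bool]]| <= #|[set: T]| by apply: subset_leq_card; exact: subsetT.
  rewrite card_imset // !cardsT in h2 h1.
  have ec : #|{: 'I_m.+2 * bool}| = m.+2 * 2 by rewrite card_prod card_ord card_bool.
  rewrite ec in h2.
  have := leq_trans h2 h1; lia.
Qed.

End Bwd.
Lemma bwd_iso (T : finType) (le : rel T) (Hpo : partial_order le) (m : nat) (c : bool) :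
  iso_sub [set: T] le [set: ('I_m.+2 * bool)%type] (Mrel c m.+2) -> in_odot_C2_C2 le.
Proof.
move=> [g [gi gim grel]].
have ex : forall x : T, exists w, g w = x.
  move=> x; have : x \in [set g w | w in [set: 'I_m.+2 * bool]] by rewrite gim inE.
  by case/imsetP => w _ ->; exists w.
have [h hK] := fin_all_exists ex.
have ghK : cancel g h by move=> w; apply: gi; rewrite ?inE ?hK.
apply: (@bwd_main T le Hpo m c g h ghK hK).
by move=> v w; rewrite -grel ?inE.
Qed.

Theorem mainTheorem7 (T : finType) (le : rel T) (Hpo : partial_order le) :
  in_odot_C2_C2 le <->
  ((exists n : nat, 2 <= n /\ iso_sub [set: T] le [set: ('I_n * bool)%type] (par_le n)) \/
   (exists n : nat, 3 <= n /\ iso_sub [set: T] le [set: ('I_n * bool)%type] (crown_le n))).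
Proof.
split; first exact: fwd_dir.
case => [[[|[|m]] [hn hiso]] | [[|[|m]] [hn hiso]]] //.
- apply: (@bwd_iso T le Hpo m true).
  by apply: iso_sub_ext hiso => v w; rewrite par_Mrel.
- apply: (@bwd_iso T le Hpo m false).
  by apply: iso_sub_ext hiso => v w; rewrite crown_Mrel.
Qed.
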